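(* Let $X=\{x_j:j\in J\}\subset\mathbb{R}^2$ be finite with $n=|J|$. Then the quadratic min-power centre $s^*$ of $X$ lies in $\mathrm{conv}(\mathcal{M})$, where $\mathcal{M}=\{M_j:j\in J\}$, $M_j=\frac{1}{n+1}\big(x_j+\sum_{i\in J}x_i\big)$.
   Context: $s^*$ is the unique minimiser of $P(s)=\sum_{i\in J}\|s-x_i\|^2+\max_{i\in J}\|s-x_i\|^2$. *)

(* Defs.v *)
From mathcomp Require Import all_boot all_order all_algebra.
From mathcomp Require Import reals.
Set Implicit Arguments. Unset Strict Implicit. Unset Printing Implicit Defensive.
Import Order.TTheory GRing.Theory Num.Theory.
Local Open Scope ring_scope.

Definition sqdist (R : realType) (s y : 'rV[R]_2) : R :=
  \sum_(k < 2) (s 0 k - y 0 k) ^+ 2.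

(* P(s) = sum_i |s - x_i|^2 + max_i |s - x_i|^2 ; the max of nonnegative
   reals is taken with neutral element 0 (harmless since all terms are >= 0) *)
Definition Ppow (R : realType) (J : finType) (x : J -> 'rV[R]_2) (s : 'rV[R]_2) : R :=
  \sum_(i : J) sqdist s (x i) + \big[Num.max/0]_(i : J) sqdist s (x i).

Definition Mpt (R : realType) (J : finType) (x : J -> 'rV[R]_2) (j : J) : 'rV[R]_2 :=
  (#|J|.+1%:R)^-1 *: (x j + \sum_(i : J) x i).

Definition in_conv (R : realType) (J : finType) (M : J -> 'rV[R]_2) (p : 'rV[R]_2) : Prop :=
  exists l : J -> R, (forall j, 0 <= l j) /\ \sum_(j : J) l j = 1 /\
    p = \sum_(j : J) l j *: M j.

(* Main.v *)
Require Import Defs.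
From mathcomp Require Import all_boot all_order all_algebra.
From mathcomp Require Import reals ring lra.
Import Order.TTheory GRing.Theory Num.Theory.
Local Open Scope ring_scope.
Lemma sqdistE (R : realType) (s y : 'rV[R]_2) :
  sqdist s y = (s 0 0 - y 0 0) ^+ 2 + (s 0 1 - y 0 1) ^+ 2.
Proof.
rewrite /sqdist big_ord_recr big_ord_recl big_ord0 /= addr0.
have -> : widen_ord (leqnSn 1) ord0 = 0 :> 'I_2 by apply/val_inj.
by have -> : ord_max = 1 :> 'I_2 by apply/val_inj.
Qed.

Section Gordan.
Variables (R : realFieldType) (J : finType) (u v : J -> R).

Definition conv0 := exists l : J -> R, (forall j, 0 <= l j) /\ \sum_j l j = 1 /\
  \sum_j l j * u j = 0 /\ \sum_j l j * v j = 0.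

Definition cert (m : J -> R) (c : R) := (forall j, 0 <= m j) /\ 0 < \sum_j m j /\
  \sum_j m j * v j = 0 /\ \sum_j m j * u j = c.

Lemma lin_sum (a b : R) (f g w : J -> R) :
  \sum_j (a * f j - b * g j) * w j = a * \sum_j f j * w j - b * \sum_j g j * w j.
Proof.
rewrite (eq_bigr (fun j => a * (f j * w j) - b * (g j * w j))); last first.
  by move=> j _; rewrite mulrBl !mulrA.
by rewrite sumrB -!mulr_sumr.
Qed.

Lemma lin_sum1 (a b : R) (f g : J -> R) :
  \sum_j (a * f j - b * g j) = a * \sum_j f j - b * \sum_j g j.
Proof.
by rewrite sumrB -!mulr_sumr.
Qed.

Lemma cert_norm m : cert m 0 -> conv0.
Proof.
move=> [h0 [hs [hv hu]]].
exists (fun j => m j / \sum_k m k); split; [|split; [|split]].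
- by move=> j; apply: divr_ge0 => //; apply: ltW.
- by rewrite -mulr_suml divff // gt_eqF.
- rewrite (eq_bigr (fun j => (m j * u j) / \sum_k m k)); last by move=> j _; rewrite mulrAC.
  by rewrite -mulr_suml hu mul0r.
- rewrite (eq_bigr (fun j => (m j * v j) / \sum_k m k)); last by move=> j _; rewrite mulrAC.
  by rewrite -mulr_suml hv mul0r.
Qed.

Lemma combine m1 m2 c1 c2 : cert m1 c1 -> cert m2 c2 -> c1 <= 0 -> 0 <= c2 -> conv0.
Proof.
move=> h1 h2 hc1 hc2.
have [e1|n1] := eqVneq c1 0; first by apply: (@cert_norm (m1)); rewrite -e1.
have [e2|n2] := eqVneq c2 0; first by apply: (@cert_norm (m2)); rewrite -e2.
have l1 : c1 < 0 by rewrite lt_neqAle n1.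
have l2 : 0 < c2 by rewrite lt_neqAle eq_sym n2.
move: h1 h2 => [a0 [as_ [av au]]] [b0 [bs [bv bu]]].
apply: (@cert_norm (fun j => c2 * m1 j - c1 * m2 j)); split; [|split; [|split]].
- move=> j; have := a0 j; have := b0 j; nra.
- rewrite lin_sum1; nra.
- by rewrite lin_sum av bv !mulr0 subrr.
- by rewrite lin_sum au bu mulrC subrr.
Qed.

Definition delta (j : J) := fun k : J => (k == j)%:R : R.

Lemma delta_sum j (w : J -> R) : \sum_k delta j k * w k = w j.
Proof.
rewrite (bigD1 j) //= big1 /delta ?eqxx ?mul1r ?addr0 // => k /negbTE ->.
by rewrite mul0r.
Qed.

Lemma delta_sum1 j : \sum_k delta j k = 1.
Proof.
rewrite (eq_bigr (fun k => delta j k * 1)); last by move=> k _; rewrite mulr1.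
by rewrite delta_sum.
Qed.

Lemma cert_zero j : v j = 0 -> cert (delta j) (u j).
Proof.
move=> hj; split; [|split; [|split]].
- by move=> k; rewrite /delta ler0n.
- by rewrite delta_sum1 ltr01.
- by rewrite delta_sum.
- by rewrite delta_sum.
Qed.

Lemma cert_pair i j : 0 < v i -> v j < 0 ->
  cert (fun k => v i * delta j k - v j * delta i k) (v i * u j - v j * u i).
Proof.
move=> hi hj; split; [|split; [|split]].
- move=> k; have : 0 <= delta j k by rewrite /delta ler0n.
  have : 0 <= delta i k by rewrite /delta ler0n.
  nra.
- rewrite lin_sum1 !delta_sum1; lra.
- by rewrite lin_sum !delta_sum mulrC subrr.
- by rewrite lin_sum !delta_sum.
Qed.

Definition goodb a := [forall j, (v j == 0) ==> (0 < a * u j)] &&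
  [forall i, [forall j, ((0 < v i) && (v j < 0)) ==> (0 < a * (v i * u j - v j * u i))]].

Lemma notgood a : ~~ goodb a -> exists m c, cert m c /\ a * c <= 0.
Proof.
rewrite negb_and => /orP [/existsP [j] | /existsP [i /existsP [j]]];
  rewrite negb_imply -leNgt => /andP [h1 h2].
- by exists (delta j), (u j); split => //; apply: cert_zero; apply/eqP.
- move/andP: h1 => [h1 h3].
  by exists (fun k => v i * delta j k - v j * delta i k), (v i * u j - v j * u i);
    split => //; apply: cert_pair.
Qed.

Lemma argmaxE (P : pred J) (F : J -> R) : (exists i, P i) ->
  exists i0, P i0 /\ forall i, P i -> F i <= F i0.
Proof.
move=> [i Pi]; case: (arg_maxP F Pi) => i0 Pi0 hmax.
by exists i0; split => // k Pk; apply: hmax.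
Qed.

Lemma good_sol a : goodb a -> exists b, forall j, 0 < a * u j + b * v j.
Proof.
move/andP => [/forallP hZ /forallP hP].
pose L i := - (a * u i) / v i.
have key : forall i (b : R), v i != 0 -> a * u i + b * v i = v i * (b - L i).
  by move=> i b hi; rewrite /L; field.
have pair : forall i j, 0 < v i -> v j < 0 -> L i < L j.
  move=> i j hi hj; have := hP i => /forallP /(_ j) /implyP.
  rewrite hi hj => /(_ isT) h.
  have -> : L j = L i + (a * (v i * u j - v j * u i)) / (v i * - v j).
    rewrite /L; field; apply/andP; split; by [rewrite gt_eqF | rewrite lt_eqF].
  by rewrite ltrDl; apply: divr_gt0 => //; nra.
suff [b [hb1 hb2]] : exists b, (forall i, 0 < v i -> L i < b) /\ (forall j, v j < 0 -> b < L j).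
  exists b => j; case: (ltgtP (v j) 0) => hj.
  - rewrite key ?lt_eqF //; have := hb2 j hj; nra.
  - rewrite key ?gt_eqF //; have := hb1 j hj; nra.
  - have := hZ j => /implyP; rewrite hj eqxx mulr0 addr0; exact.
have [ep|np] := boolP [exists i, 0 < v i]; have [en|nn] := boolP [exists j, v j < 0].
- have [i0 [hi0 mi0]] := argmaxE (fun i => 0 < v i) L (existsP ep).
  have [j0 [hj0 mj0]] := argmaxE (fun i => v i < 0) (fun i => - L i) (existsP en).
  have := pair i0 j0 hi0 hj0 => hij.
  exists ((L i0 + L j0) / 2); split.
  + move=> i hi; have := mi0 i hi; lra.
  + move=> j hj; have := mj0 j hj; lra.
- have [i0 [hi0 mi0]] := argmaxE (fun i => 0 < v i) L (existsP ep).
  exists (L i0 + 1); split.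
  + move=> i hi; have := mi0 i hi; lra.
  + by move=> j hj; move/existsPn: nn => /(_ j); rewrite hj.
- have [j0 [hj0 mj0]] := argmaxE (fun i => v i < 0) (fun i => - L i) (existsP en).
  exists (L j0 - 1); split.
  + by move=> j hj; move/existsPn: np => /(_ j); rewrite hj.
  + move=> j hj; have := mj0 j hj; lra.
- exists 0; split.
  + by move=> j hj; move/existsPn: np => /(_ j); rewrite hj.
  + by move=> j hj; move/existsPn: nn => /(_ j); rewrite hj.
Qed.

Lemma gordan : conv0 \/ exists a b, forall j, 0 < a * u j + b * v j.
Proof.
have [g1|n1] := boolP (goodb 1); first by right; exists 1; apply: good_sol.
have [g2|n2] := boolP (goodb (-1)); first by right; exists (-1); apply: good_sol.
left; have [m1 [c1 [h1 e1]]] := @notgood 1 n1; have [m2 [c2 [h2 e2]]] := @notgood (-1) n2.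
apply: (@combine m1 m2 c1 c2 h1 h2); rewrite ?mul1r ?mulN1r in e1 e2; lra.
Qed.
End Gordan.

Lemma ord2_cases (k : 'I_2) : k = 0 \/ k = 1.
Proof. by case: k => [[|[|//]]] ?; [left|right]; apply/val_inj. Qed.

Theorem lemma4 (R : realType) (J : finType) (x : J -> 'rV[R]_2)
  (hJ : (0 < #|J|)%N) (hx : injective x) (s : 'rV[R]_2)
  (hmin : forall t : 'rV[R]_2, Ppow x s <= Ppow x t) :
  in_conv (Mpt x) s.
Proof.
set X := \sum_(i : J) x i.
set N1 : R := (#|J|.+1)%:R.
have N1E : N1 = #|J|%:R + 1 by rewrite /N1 -natr1.
have N1n0 : N1 != 0 by rewrite /N1 pnatr_eq0.
set p : 'rV[R]_2 := N1 *: s - X.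
have pE : forall k, p 0 k = N1 * s 0 k - \sum_(i : J) x i 0 k.
  by move=> k; rewrite /p !mxE summxE.
pose u j := x j 0 0 - p 0 0.
pose v j := x j 0 1 - p 0 1.
case: (@gordan R J u v) => [[l [l0 [l1 [lu lv]]]] | [a [b hab]]].
- exists l; split => //; split => //.
  have hp : \sum_j l j *: x j = p.
    apply/rowP => k; rewrite summxE.
    have hk : forall k (w : J -> R), \sum_j l j * (w j - p 0 k) = 0 ->
        \sum_j l j * w j = p 0 k.
      move=> k' w; rewrite (eq_bigr (fun j => l j * w j - p 0 k' * l j)); last first.
        by move=> j _; rewrite mulrBr [p 0 k' * _]mulrC.
      by rewrite sumrB -mulr_sumr l1 mulr1 => /eqP; rewrite subr_eq0 => /eqP.
    rewrite (eq_bigr (fun j => l j * x j 0 k)); last by move=> j _; rewrite mxE.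
    by case: (ord2_cases k) => ->; apply: hk; [exact: lu | exact: lv].
  rewrite /Mpt (eq_bigr (fun j => N1^-1 *: (l j *: x j + l j *: X))); last first.
    by move=> j _; rewrite scalerA mulrC -scalerA scalerDr.
  rewrite -scaler_sumr big_split /= -scaler_suml l1 scale1r hp /p subrK.
  by rewrite scalerA mulVf // scale1r.
- exfalso.
  pose w i := a * u i + b * v i.
  have [i1 _] : exists i1, i1 \in J by apply/card_gt0P.
  have [i0 [_ hi0]] := @argmaxE _ _ predT (fun i => - w i) (ex_intro _ i1 isT).
  set m := w i0.
  have m0 : 0 < m by apply: hab.
  have mle : forall i, m <= w i by move=> i; have := hi0 i isT; rewrite lerN2.
  set c := a ^+ 2 + b ^+ 2.
  have c0 : 0 <= c by rewrite /c addr_ge0 // sqr_ge0.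
  set eps := m / (N1 * (c + 1)).
  have N10 : 0 < N1 by rewrite /N1 ltr0n.
  have eps0 : 0 < eps by rewrite /eps divr_gt0 // mulr_gt0 // ltr_wpDl.
  have epsN : N1 * eps = m / (c + 1).
    have hc1 : c + 1 != 0 by rewrite gt_eqF // ltr_wpDl.
    have hn1 : 1 + #|J|%:R != 0 :> R by rewrite addrC -N1E.
    by rewrite /eps; field; rewrite ?hc1 ?hn1.
  pose t : 'rV[R]_2 := s + \row_(k < 2) (if k == 0 then eps * a else eps * b).
  have t0 : t 0 0 = s 0 0 + eps * a by rewrite !mxE.
  have t1 : t 0 1 = s 0 1 + eps * b by rewrite !mxE.
  pose D i := 2 * eps * (a * (s 0 0 - x i 0 0) + b * (s 0 1 - x i 0 1)) + eps ^+ 2 * c.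
  have hD : forall i, sqdist t (x i) = sqdist s (x i) + D i.
    by move=> i; rewrite !sqdistE t0 t1 /D /c; ring.
  have hS : \sum_i sqdist t (x i) = \sum_i sqdist s (x i) + \sum_i D i.
    by rewrite -big_split; apply: eq_bigr => i _; rewrite hD.
  have hSD : \sum_i D i = 2 * eps * (a * (#|J|%:R * s 0 0 - \sum_i x i 0 0)
       + b * (#|J|%:R * s 0 1 - \sum_i x i 0 1)) + #|J|%:R * (eps ^+ 2 * c).
    rewrite (eq_bigr (fun i => (2 * eps * (a * s 0 0 + b * s 0 1) + eps ^+ 2 * c)
        - (2 * eps * a) * x i 0 0 - (2 * eps * b) * x i 0 1)); last first.
      by move=> i _; rewrite /D; ring.
    rewrite !sumrB sumr_const -!mulr_sumr -mulr_natl; ring.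
  have key : forall i, \sum_k D k + D i < 0.
    move=> i; rewrite hSD /D.
    have hw := mle i.
    have : 2 * eps * w i - N1 * eps ^+ 2 * c > 0.
      have e1 : N1 * eps ^+ 2 * c = eps * (m * (c / (c + 1))).
        have -> : N1 * eps ^+ 2 * c = (N1 * eps) * eps * c by ring.
        by rewrite epsN; field; rewrite gt_eqF // ltr_wpDl.
      have cc : c / (c + 1) < 1.
        by rewrite ltr_pdivrMr ?ltr_wpDl // mul1r ltrDl.
      have cc0 : 0 <= c / (c + 1) by rewrite divr_ge0 // addr_ge0.
      have h2 : 0 < 2 * w i - m * (c / (c + 1)) by nra.
      rewrite e1 (_ : 2 * eps * w i - eps * (m * (c / (c + 1))) = eps * (2 * w i - m * (c / (c + 1)))); last by ring.
      exact: mulr_gt0.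
    rewrite /w /u /v !pE N1E; nra.
  have := hmin t; apply/negP; rewrite -ltNge /Ppow hS.
  set K := \big[Num.max/0]_i sqdist s (x i) - \sum_i D i.
  suff : \big[Num.max/0]_i sqdist t (x i) < K.
    rewrite /K => h; lra.
  have hK : forall i, sqdist t (x i) < K.
    move=> i; rewrite hD /K.
    have := le_bigmax 0 (fun i => sqdist s (x i)) i.
    have := key i; move=> h1 h2; lra.
  apply: (big_ind (fun y => y < K)).
  + by apply: le_lt_trans (hK i1); rewrite sqdistE addr_ge0 // sqr_ge0.
  + by move=> y z hy hz; rewrite gt_max hy hz.
  + by move=> i _; apply: hK.
Qed.
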